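(* Let $\mathbb{F}\in\{\mathbb{R},\mathbb{C}\}$, let $\nu$ be a vector norm on $\mathbb{F}^n$, and let $A\in\mathbb{F}^{n\times n}$ be nonexpansive with respect to $\nu$. Let $H=\mathcal{R}(I-A)$ and $K=\mathcal{N}(I-A)$. Suppose that $\nu(y+z)=\nu(y)+\nu(z)$ for all $y\in H$, $z\in K$. Then the following are equivalent: (i) $A$ is $l$-paracontracting with respect to $\nu$; (ii) $A$ is paracontracting with respect to $\nu$; (iii) $A$ is an $H$-contractor with respect to $\nu$.
   Context: $\mathcal{R}$ denotes range and $\mathcal{N}$ denotes nullspace. The operator norm is $\nu^0(A)=\sup_{x\neq 0}\nu(Ax)/\nu(x)$; $A$ is nonexpansive with respect to $\nu$ if $\nu^0(A)\le 1$. For a subspace $H$ invariant under $A$, $\nu^0_H(A)=\sup_{0\neq x\in H}\nu(Ax)/\nu(x)$. $A$ is paracontracting with respect to $\nu$ if $\nu(Ax)<\nu(x)$ whenever $Ax\ne x$. $A$ is $l$-paracontracting with respect to $\nu$ if there is $\gamma>0$ such that $\nu(Ax)\le \nu(x)-\gamma\,\nu(Ax-x)$ for all $x\in\mathbb{F}^n$. $A$ is an $H$-contractor with respect to $\nu$ if $A$ is nonexpansive, $H$ is invariant under $A$, and $\nu^0_H(A)<1$. *)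

(* Defs.v *)
From mathcomp Require Import all_boot all_order all_algebra.
From mathcomp Require Import reals.
From mathcomp Require Import complex.
Set Implicit Arguments. Unset Strict Implicit. Unset Printing Implicit Defensive.
Import Order.TTheory GRing.Theory Num.Theory.
Local Open Scope ring_scope.

Section Defs.
Variables (F : numFieldType) (n : nat).

(* A vector norm on F^n (column vectors); values are nonnegative, hence real. *)
Definition is_vector_norm (nu : 'cV[F]_n -> F) : Prop :=
  [/\ (forall x, 0 <= nu x),
      (forall x, nu x = 0 -> x = 0),
      (forall (a : F) x, nu (a *: x) = `|a| * nu x) &
      (forall x y, nu (x + y) <= nu x + nu y)].

Definition range_mx (M : 'M[F]_n) : 'cV[F]_n -> Prop :=
  fun y => exists x, y = M *m x.
Definition null_mx (M : 'M[F]_n) : 'cV[F]_n -> Prop :=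
  fun z => M *m z = 0.

Definition invariant (A : 'M[F]_n) (H : 'cV[F]_n -> Prop) : Prop :=
  forall x, H x -> H (A *m x).

(* s is the operator (semi)norm nu^0_H(A) = sup_{0 <> x in H} nu(Ax)/nu(x),
   i.e. the least nonnegative upper bound of these ratios (sup of the empty
   set taken to be 0). *)
Definition is_opnorm_on (nu : 'cV[F]_n -> F) (H : 'cV[F]_n -> Prop)
    (A : 'M[F]_n) (s : F) : Prop :=
  [/\ 0 <= s,
      (forall x, H x -> x != 0 -> nu (A *m x) / nu x <= s) &
      (forall t, 0 <= t -> (forall x, H x -> x != 0 -> nu (A *m x) / nu x <= t) ->
         s <= t)].

Definition is_opnorm nu A s := is_opnorm_on nu (fun _ => True) A s.

Definition nonexpansive (nu : 'cV[F]_n -> F) (A : 'M[F]_n) : Prop :=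
  exists s, is_opnorm nu A s /\ s <= 1.

Definition paracontracting (nu : 'cV[F]_n -> F) (A : 'M[F]_n) : Prop :=
  forall x, A *m x != x -> nu (A *m x) < nu x.

Definition l_paracontracting (nu : 'cV[F]_n -> F) (A : 'M[F]_n) : Prop :=
  exists gamma : F, 0 < gamma /\
    forall x, nu (A *m x) <= nu x - gamma * nu (A *m x - x).

Definition H_contractor (nu : 'cV[F]_n -> F) (H : 'cV[F]_n -> Prop)
    (A : 'M[F]_n) : Prop :=
  [/\ nonexpansive nu A, invariant A H &
      exists s, is_opnorm_on nu H A s /\ s < 1].

Definition theorem2p7_over : Prop :=
  forall (nu : 'cV[F]_n -> F) (A : 'M[F]_n),
    is_vector_norm nu -> nonexpansive nu A ->
    let H := range_mx (1%:M - A) in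
    let K := null_mx (1%:M - A) in
    (forall y z, H y -> K z -> nu (y + z) = nu y + nu z) ->
    (l_paracontracting nu A <-> paracontracting nu A) /\
    (paracontracting nu A <-> H_contractor nu H A).

End Defs.

(* Main.v *)
Require Import Defs.
From mathcomp Require Import all_boot all_order all_algebra.
From mathcomp Require Import reals complex.
From mathcomp Require Import zify ring.
From mathcomp Require Import classical_sets boolp topology normedtype derive.
From Stdlib Require Import ClassicalEpsilon.
Set Implicit Arguments. Unset Strict Implicit. Unset Printing Implicit Defensive.
Import Order.TTheory GRing.Theory Num.Theory.
Import numFieldNormedType.Exports.
Local Open Scope classical_set_scope.
Local Open Scope ring_scope.

Lemma decomp (F : fieldType) n (B : 'M[F]_n) :
  (forall x : 'cV[F]_n, B *m (B *m x) = 0 -> B *m x = 0) ->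
  forall x : 'cV[F]_n, exists w : 'cV[F]_n, B *m x = B *m (B *m w).
Proof.
move=> HB x.
set C := B^T.
have kerE : (kermx (C *m C) <= kermx C)%MS.
  apply/sub_kermxP; set D := kermx _.
  apply: trmx_inj; rewrite trmx0 trmx_mul trmxK.
  have E : D *m B^T *m B^T = 0 by rewrite -mulmxA; apply/sub_kermxP.
  apply: trmx_inj; rewrite trmx_mul trmxK trmx0; apply/row_matrixP => i.
  rewrite row_mul row0; apply: trmx_inj; rewrite trmx_mul trmxK trmx0.
  apply: HB; apply: trmx_inj; rewrite !trmx_mul !trmxK trmx0.
  by rewrite -row_mul -row_mul E row0.
have rk : \rank (C *m C) = \rank C.
  have := mxrankS kerE; rewrite !mxrank_ker.
  have := mxrankS (submxMl C C).
  have := rank_leq_col C. lia.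
have sCC : (C <= C *m C)%MS.
  have := mxrank_leqif_sup (submxMl C C); rewrite rk => -[_].
  by rewrite eqxx => /esym.
have : (x^T *m C <= C *m C)%MS by apply: submx_trans sCC; apply: submxMl.
case/submxP => D HD.
exists D^T; apply: trmx_inj.
by rewrite !trmx_mul !trmxK HD mulmxA.
Qed.

Section Alg.
Variables (F : numFieldType) (n : nat) (nu : 'cV[F]_n -> F) (A : 'M[F]_n).
Hypothesis Hnu : is_vector_norm nu.
Local Notation B := (1%:M - A).
Hypothesis Hadd : forall y z, range_mx B y -> null_mx B z -> nu (y + z) = nu y + nu z.

Lemma nu_ge0 x : 0 <= nu x. Proof. by case: Hnu. Qed.
Lemma nu_eq0 x : nu x = 0 -> x = 0. Proof. by case: Hnu => _ H _ _; apply: H. Qed.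
Lemma nuZ a x : nu (a *: x) = `|a| * nu x. Proof. by case: Hnu. Qed.
Lemma nuD x y : nu (x + y) <= nu x + nu y. Proof. by case: Hnu. Qed.
Lemma nu0 : nu 0 = 0.
Proof. by rewrite -(scale0r 0) nuZ normr0 mul0r. Qed.
Lemma nuN x : nu (- x) = nu x.
Proof. by rewrite -scaleN1r nuZ normrN normr1 mul1r. Qed.
Lemma nu_gt0 x : x != 0 -> 0 < nu x.
Proof.
move=> xn; rewrite lt_def nu_ge0 andbT.
by apply: contra xn => /eqP/nu_eq0 ->.
Qed.
Lemma nuB x y : nu x - nu y <= nu (x - y).
Proof. by rewrite lerBlDr; apply: le_trans (nuD _ _); rewrite subrK. Qed.
Lemma nuBs x y : nu (x - y) <= nu x + nu y.
Proof. by apply: le_trans (nuD x (- y)) _; rewrite nuN. Qed.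

Lemma range_sub y y' : range_mx B y -> range_mx B y' -> range_mx B (y - y').
Proof. by move=> [w ->] [w' ->]; exists (w - w'); rewrite mulmxBr. Qed.
Lemma range_scale a y : range_mx B y -> range_mx B (a *: y).
Proof. by move=> [w ->]; exists (a *: w); rewrite scalemxAr. Qed.
Lemma null_sub z z' : null_mx B z -> null_mx B z' -> null_mx B (z - z').
Proof. by rewrite /null_mx mulmxBr => -> ->; rewrite subrr. Qed.
Lemma null_scale a z : null_mx B z -> null_mx B (a *: z).
Proof. by rewrite /null_mx -scalemxAr => ->; rewrite scaler0. Qed.
Lemma null0 : null_mx B 0. Proof. by rewrite /null_mx mulmx0. Qed.

Lemma HK0 v : range_mx B v -> null_mx B v -> v = 0.
Proof.
move=> Hr Hn.
have Hn' : null_mx B (- v) by rewrite /null_mx mulmxN Hn oppr0.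
have := Hadd Hr Hn'; rewrite subrr nu0 nuN => /eqP.
rewrite eq_sym -mulr2n mulrn_eq0 /= => /eqP; exact: nu_eq0.
Qed.

Lemma decompose x : exists y, range_mx B y /\ null_mx B (x - y).
Proof.
have [|w Hw] := @decomp _ _ B _ x.
  move=> v Hv; apply: HK0 => //; by exists v.
exists (B *m w); split; first by exists w.
by rewrite /null_mx mulmxBr Hw subrr.
Qed.

Lemma A_null z : null_mx B z -> A *m z = z.
Proof. by rewrite /null_mx mulmxBl mul1mx => /eqP; rewrite subr_eq0 => /eqP. Qed.
Lemma A_range y : range_mx B y -> range_mx B (A *m y).
Proof.
move=> [w ->]; exists (A *m w).
have E : A *m B = B *m A by rewrite mulmxBr mulmxBl mulmx1 mul1mx.
by rewrite !mulmxA E.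
Qed.

Variable P : 'cV[F]_n -> 'cV[F]_n.
Hypothesis HP : forall x, range_mx B (P x) /\ null_mx B (x - P x).

Lemma P_uniq x y : range_mx B y -> null_mx B (x - y) -> P x = y.
Proof.
move=> Hr Hn; have [Hr' Hn'] := HP x.
apply/eqP; rewrite -subr_eq0; apply/eqP; apply: HK0.
  exact: range_sub.
have E : x - y - (x - P x) = P x - y by rewrite opprB addrC addrA subrK.
by rewrite -E; apply: null_sub.
Qed.
Lemma P_range y : range_mx B y -> P y = y.
Proof. by move=> Hr; apply: P_uniq => //; rewrite subrr; exact: null0. Qed.
Lemma P_sub x x' : P (x - x') = P x - P x'.
Proof.
have [H1 N1] := HP x; have [H2 N2] := HP x'.
apply: P_uniq; first exact: range_sub.
have E : x - P x - (x' - P x') = x - x' - (P x - P x').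
  by rewrite !opprB addrACA [RHS]addrACA; congr (_ + _); exact: addrC.
by rewrite -E; apply: null_sub.
Qed.
Lemma P_scale a x : P (a *: x) = a *: P x.
Proof.
have [H1 N1] := HP x.
apply: P_uniq; first exact: range_scale.
by rewrite -scalerBr; exact: null_scale.
Qed.
Lemma nu_split x : nu x = nu (P x) + nu (x - P x).
Proof. have [H1 N1] := HP x; by rewrite -Hadd // addrC subrK. Qed.
Lemma nu_P_le x : nu (P x) <= nu x.
Proof. by rewrite [leRHS]nu_split lerDl nu_ge0. Qed.

Hypothesis Hne : nonexpansive nu A.
Lemma nuA_le x : nu (A *m x) <= nu x.
Proof.
case: Hne => s [[s0 Hs _] s1].
have [->|xn] := eqVneq x 0; first by rewrite mulmx0.
have := Hs x I xn; rewrite ler_pdivrMr ?nu_gt0 // => h.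
apply: le_trans h _; rewrite ler_piMl ?nu_ge0 //.
Qed.

Lemma i_ii : l_paracontracting nu A -> paracontracting nu A.
Proof.
move=> [g [g0 Hg]] x Hx.
apply: le_lt_trans (Hg x) _.
rewrite ltrBlDr ltrDl; apply: mulr_gt0 => //; apply: nu_gt0.
by rewrite subr_eq0.
Qed.

Lemma iii_i : H_contractor nu (range_mx B) A -> l_paracontracting nu A.
Proof.
move=> [_ _ [s [[s0 Hs _] s1]]].
have Hy y : range_mx B y -> nu (A *m y) <= s * nu y.
  move=> Hr; have [->|yn] := eqVneq y 0; first by rewrite mulmx0 nu0 mulr0.
  by have := Hs y Hr yn; rewrite ler_pdivrMr ?nu_gt0.
exists ((1 - s) / 2); split.
  by apply: divr_gt0; rewrite ?subr_gt0 ?ltr0n.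
move=> x.
have [H1 N1] := HP x.
have Ex : A *m x = A *m P x + (x - P x).
  rewrite [in LHS](_ : x = P x + (x - P x)); last by rewrite addrC subrK.
  by rewrite mulmxDr (A_null N1).
have Ex2 : A *m x - x = A *m P x - P x.
  by rewrite Ex -addrA [x - P x]addrC addrK.
rewrite Ex2 Ex Hadd //; last exact: A_range.
rewrite (nu_split x).
have h1 := Hy _ H1.
have h2 := nuBs (A *m P x) (P x).
have b0 := nu_ge0 (P x).
have hd : (1 - s) / 2 * nu (A *m P x - P x) <= (1 - s) * nu (P x).
  have q : 0 <= (1 - s) / 2 by apply: divr_ge0; rewrite ?subr_ge0 ?ltW // ler0n.
  apply: le_trans (ler_wpM2l q h2) _.
  have : nu (A *m P x) + nu (P x) <= nu (P x) *+ 2.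
    rewrite mulr2n lerD2r; apply: le_trans h1 _; rewrite ler_piMl // ltW //.
  move/(ler_wpM2l q); move/le_trans; apply.
  rewrite mulrnAr -mulrnAl (_ : (1 - s) / 2 *+ 2 = 1 - s) //.
  by rewrite -(mulr_natr ((1 - s) / 2) 2) divfK // pnatr_eq0.
rewrite addrAC lerD2r lerBrDr.
apply: le_trans (lerD h1 hd) _.
by rewrite -mulrDl addrC subrK mul1r.
Qed.
End Alg.

Lemma lip_cont (R : realType) m (f : 'rV[R]_m -> R) (k : R) :
  (forall u v, `|f u - f v| <= k * `|u - v|) -> continuous f.
Proof.
move=> Hf x.
have FF : Filter (nbhs x) by apply: nbhs_filter.
apply/(@cvgrPdist_lt _ _ _ _ FF) => e e0.
have k1 : 0 < `|k| + 1 by rewrite ltr_wpDl.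
near=> y.
apply: le_lt_trans (Hf x y) _.
have hy : `|x - y| < e / (`|k| + 1).
  near: y; apply/(@nbhs_normP R 'rV[R]_m); exists (e / (`|k| + 1)); first by apply: divr_gt0.
  by move=> z /=.
apply: (@le_lt_trans _ _ ((`|k| + 1) * `|x - y|)).
  apply: le_trans (ler_wpM2r (normr_ge0 _) (ler_norm k)) _.
  by apply: ler_wpM2r => //; rewrite lerDl.
by rewrite -ltr_pdivlMl // mulrC.
Unshelve. all: by end_near. Qed.

Lemma core_real (R : realType) m (f : 'rV[R]_m -> R) (k : R) :
  (forall u v, `|f u - f v| <= k * `|u - v|) ->
  (forall v : 'rV[R]_m, `|v| = 1 -> 0 < f v) ->
  exists2 c, 0 < c & forall v : 'rV[R]_m, `|v| = 1 -> c <= f v.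
Proof.
move=> Hf Hpos.
case: (pselect (exists v : 'rV[R]_m, `|v| = 1)); last first.
  move=> Hn; exists 1 => // v Hv; exfalso; apply: Hn; by exists v.
move=> [v0 Hv0].
set S := [set v : 'rV[R]_m | `|v| = 1].
have cS : compact S.
  apply: bounded_closed_compact.
    have PF : ProperFilter (globally S) by apply: (@globally_properfilter _ S v0).
    by apply/ex_bound; exists 1 => v /= ->.
  have := @preimage_closed _ _ (@Num.norm _ 'rV[R]_m) [set 1] _ (@closed_eq R 1).
  apply => x _; exact: norm_continuous.
have [c Sc Hc] := @EVT_min_rV R m f S (ex_intro _ v0 Hv0) cS
  (continuous_subspaceT (lip_cont Hf)).
exists (f c); first by apply: Hpos; move: Sc; rewrite inE.
by move=> v Hv; apply: Hc; rewrite inE.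
Unshelve. all: by end_near. Qed.

Lemma coord_le (R : realType) m (v : 'rV[R]_m) j : `|v 0 j| <= `|v|.
Proof.
rewrite [leRHS]/Num.norm /= mx_normrE; apply/bigmax_geP; right => /=.
by exists (0, j).
Qed.

Section Core.
Variables (R : realType) (F : numFieldType) (n m : nat).
Variable iota : {rmorphism R -> F}.
Hypothesis iota_le : forall x y, (iota x <= iota y) = (x <= y).
Hypothesis iota_lt : forall x y, (iota x < iota y) = (x < y).
Variable rho : F -> R.
Hypothesis iota_rho : forall x, 0 <= x -> iota (rho x) = x.
Variable psi : 'rV[R]_m -> 'cV[F]_n.
Hypothesis psiD : forall u v, psi (u + v) = psi u + psi v.
Hypothesis psiZ : forall r v, psi (r *: v) = iota r *: psi v.
Hypothesis psi_eq0 : forall v, psi v = 0 -> v = 0.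
Hypothesis psi_surj : forall x, exists v, x = psi v.
Variable nu : 'cV[F]_n -> F.
Hypothesis Hnu : is_vector_norm nu.

Let nu_ge0 x : 0 <= nu x. Proof. by case: Hnu. Qed.
Let nu_eq0 x : nu x = 0 -> x = 0. Proof. by case: Hnu => _ H _ _; apply: H. Qed.
Let nuZ a x : nu (a *: x) = `|a| * nu x. Proof. by case: Hnu. Qed.
Let nuD x y : nu (x + y) <= nu x + nu y. Proof. by case: Hnu. Qed.
Let nu0 : nu 0 = 0.
Proof. by rewrite -(scale0r 0) nuZ normr0 mul0r. Qed.

Lemma iota_norm r : `|iota r| = iota `|r|.
Proof.
have [r0|r0] := leP 0 r.
  by rewrite !ger0_norm // -(rmorph0 iota) iota_le.
rewrite !ltr0_norm // ?rmorphN // -(rmorph0 iota) iota_lt //.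
Qed.

Lemma psi0 : psi 0 = 0.
Proof. by apply: (@addrI _ (psi 0)); rewrite -psiD !addr0. Qed.
Lemma psiB u v : psi (u - v) = psi u - psi v.
Proof. by rewrite psiD -scaleN1r psiZ rmorphN rmorph1 scaleN1r. Qed.

Lemma nu_sum I (r : seq I) (G : I -> 'cV[F]_n) :
  nu (\sum_(i <- r) G i) <= \sum_(i <- r) nu (G i).
Proof.
apply: (big_ind2 (fun a b => nu a <= b)); first by rewrite nu0.
  by move=> x1 x2 y1 y2 h1 h2; apply: le_trans (nuD _ _) (lerD h1 h2).
by [].
Qed.

Lemma nu_psi_le : exists2 M, 0 <= M & forall v, nu (psi v) <= iota `|v| * M.
Proof.
exists (\sum_(j < m) nu (psi 'e_j)); first by apply: sumr_ge0 => j _.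
move=> v; rewrite {1}(row_sum_delta v).
rewrite (big_morph psi psiD psi0).
apply: le_trans (nu_sum _ _) _.
rewrite mulr_sumr; apply: ler_sum => j _.
rewrite psiZ nuZ iota_norm; apply: ler_wpM2r => //.
by rewrite iota_le coord_le.
Qed.

Lemma sphere x : x != 0 ->
  exists r, exists w, [/\ 0 < r, `|w| = 1 & x = iota r *: psi w].
Proof.
move=> xn; have [v xE] := psi_surj x; subst x.
have vn : v != 0 by apply: contra xn => /eqP ->; rewrite psi0.
have r0 : 0 < `|v| by rewrite normr_gt0.
exists `|v|, (`|v|^-1 *: v); split => //.
  by rewrite mx_normZ normfV normr_id mulVf // gt_eqF.
by rewrite -psiZ scalerA mulfV ?gt_eqF // scale1r.
Qed.

Lemma core (G : 'cV[F]_n -> F) (L : F) : 0 <= L ->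
  (forall r x, 0 <= r -> G (iota r *: x) = iota r * G x) ->
  (forall x y, `|G x - G y| <= L * nu (x - y)) ->
  (forall x, x != 0 -> 0 < G x) ->
  exists2 c, 0 < c & forall x, c * nu x <= G x.
Proof.
move=> L0 HZ HL Hpos.
have G0 : G 0 = 0.
  by have := HZ 0 0 (lexx 0); rewrite rmorph0 mul0r scale0r.
have Gge0 x : 0 <= G x.
  by have [->|xn] := eqVneq x 0; [rewrite G0 | apply: ltW; apply: Hpos].
have [M M0 HM] := nu_psi_le.
pose f v := rho (G (psi v)).
have fE v : iota (f v) = G (psi v) by rewrite iota_rho.
pose k := rho (L * M).
have kE : iota k = L * M by rewrite iota_rho // mulr_ge0.
have Hf u v : `|f u - f v| <= k * `|u - v|.
  rewrite -iota_le rmorphM kE -iota_norm rmorphB !fE.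
  apply: le_trans (HL _ _) _; rewrite -psiB -mulrA ler_wpM2l // mulrC.
  exact: HM.
have fpos v : `|v| = 1 -> 0 < f v.
  move=> v1; rewrite -iota_lt rmorph0 fE; apply: Hpos.
  apply/eqP => /psi_eq0 v0; move: v1; rewrite v0 normr0 => /eqP.
  by rewrite eq_sym oner_eq0.
have [c0 c00 Hc0] := core_real Hf fpos.
exists (iota c0 / (M + 1)).
  by apply: divr_gt0; [rewrite -(rmorph0 iota) iota_lt | rewrite ltr_wpDl].
move=> x; have [->|xn] := eqVneq x 0; first by rewrite nu0 mulr0 G0.
have [r [w [r0 w1 ->]]] := sphere xn.
have ir0 : 0 < iota r by rewrite -(rmorph0 iota) iota_lt.
rewrite HZ; last exact: ltW.
rewrite nuZ ger0_norm; last exact: ltW.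
have h1 : iota c0 <= G (psi w) by rewrite -fE iota_le; apply: Hc0.
have h2 : nu (psi w) <= M by have := HM w; rewrite w1 rmorph1 mul1r.
rewrite mulrCA; apply: ler_wpM2l; first exact: ltW ir0.
apply: le_trans _ h1.
have M1 : 0 < M + 1 by rewrite ltr_wpDl.
rewrite mulrAC ler_pdivrMr //; apply: ler_wpM2l.
  by rewrite -(rmorph0 iota) iota_le ltW.
by apply: le_trans h2 _; rewrite lerDl.
Qed.
End Core.

Section Main.
Variables (R : realType) (F : numFieldType) (n m : nat).
Variable iota : {rmorphism R -> F}.
Hypothesis iota_le : forall x y, (iota x <= iota y) = (x <= y).
Hypothesis iota_lt : forall x y, (iota x < iota y) = (x < y).
Variable rho : F -> R.
Hypothesis iota_rho : forall x, 0 <= x -> iota (rho x) = x.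
Variable psi : 'rV[R]_m -> 'cV[F]_n.
Hypothesis psiD : forall u v, psi (u + v) = psi u + psi v.
Hypothesis psiZ : forall r v, psi (r *: v) = iota r *: psi v.
Hypothesis psi_eq0 : forall v, psi v = 0 -> v = 0.
Hypothesis psi_surj : forall x, exists v, x = psi v.
Variables (nu : 'cV[F]_n -> F) (A : 'M[F]_n).
Hypothesis Hnu : is_vector_norm nu.
Local Notation B := (1%:M - A).
Hypothesis Hadd : forall y z, range_mx B y -> null_mx B z -> nu (y + z) = nu y + nu z.
Hypothesis Hne : nonexpansive nu A.
Variable P : 'cV[F]_n -> 'cV[F]_n.
Hypothesis HP : forall x, range_mx B (P x) /\ null_mx B (x - P x).

Lemma dist_le (a b c : F) : 0 <= a -> 0 <= b -> a - b <= c -> b - a <= c ->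
  `|a - b| <= c.
Proof.
move=> a0 b0 h1 h2; rewrite real_ler_norml ?rpredB ?ger0_real // h1 andbT.
by rewrite lerNl opprB.
Qed.

Lemma ii_iii : paracontracting nu A -> H_contractor nu (range_mx B) A.
Proof.
move=> Hpc; split => //; first by move=> x; apply: A_range.
pose G x := nu x - nu (A *m P x).
have HZ r x : 0 <= r -> G (iota r *: x) = iota r * G x.
  move=> r0; have ir0 : 0 <= iota r by rewrite -(rmorph0 iota) iota_le.
  rewrite /G (P_scale Hnu Hadd HP) -scalemxAr !(nuZ Hnu) ger0_norm //.
  by rewrite mulrBr.
have HL x y : `|G x - G y| <= 2 * nu (x - y).
  have e1 : `|nu x - nu y| <= nu (x - y).
    apply: dist_le; rewrite ?(nu_ge0 Hnu) ?(nuB Hnu) //.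
    by rewrite -(nuN Hnu (x - y)) opprB (nuB Hnu).
  have e2 : `|nu (A *m P x) - nu (A *m P y)| <= nu (x - y).
    have h : nu (A *m P x - A *m P y) <= nu (x - y).
      rewrite -mulmxBr -(P_sub Hnu Hadd HP).
      exact: le_trans (nuA_le Hnu Hne _) (nu_P_le Hnu Hadd HP _).
    apply: dist_le; rewrite ?(nu_ge0 Hnu) //.
      exact: le_trans (nuB Hnu _ _) h.
    apply: le_trans (nuB Hnu _ _) _.
    by rewrite -opprB (nuN Hnu).
  have -> : G x - G y = (nu x - nu y) + (nu (A *m P y) - nu (A *m P x)).
    by rewrite /G; ring.
  have -> : 2 * nu (x - y) = nu (x - y) + nu (x - y) by ring.
  apply: le_trans (ler_normD _ _) _; apply: lerD => //.
  by rewrite distrC.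
have Hpos x : x != 0 -> 0 < G x.
  move=> xn; rewrite /G subr_gt0.
  have [H1 N1] := HP x.
  have [Px0|Pxn] := eqVneq (P x) 0.
    by rewrite Px0 mulmx0 (nu0 Hnu) (nu_gt0 Hnu).
  have hA : A *m P x != P x.
    apply: contra Pxn => /eqP hA; apply/eqP; apply: (HK0 Hnu Hadd) => //.
    by rewrite /null_mx mulmxBl mul1mx hA subrr.
  exact: lt_le_trans (Hpc _ hA) (nu_P_le Hnu Hadd HP _).
have [c c0 Hc] := core iota_le iota_lt iota_rho psiD psiZ psi_eq0 psi_surj Hnu
  (ler0n _ 2) HZ HL Hpos.
have Hy y : range_mx B y -> nu (A *m y) * (c + 1) <= nu y.
  move=> Hr; have := Hc y; rewrite /G (P_range Hnu Hadd HP Hr) => h.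
  rewrite mulrDr mulr1 addrC.
  apply: le_trans (_ : c * nu y + nu (A *m y) <= _); last by rewrite -lerBrDr.
  rewrite addrC lerD2r mulrC; apply: ler_wpM2l; [exact: ltW | exact: nuA_le].
pose E : set R := [set t | t = 0 \/ exists x, [/\ range_mx B x, x != 0 &
                              t = rho (nu (A *m x) / nu x)]].
have ratio_ge0 x : 0 <= nu (A *m x) / nu x.
  by apply: divr_ge0; apply: nu_ge0.
have ub1 : ubound E 1.
  move=> t [->|[x [Hr xn ->]]] //.
  rewrite -(iota_le _ 1) rmorph1 iota_rho // ler_pdivrMr ?mul1r ?(nu_gt0 Hnu) //.
  exact: nuA_le.
have hE : has_ubound E by exists 1.
have E0 : E 0 by left.
have supE := ub_le_sup hE.
have sup0 : 0 <= sup E by apply: supE.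
have least t : 0 <= t ->
    (forall x, range_mx B x -> x != 0 -> nu (A *m x) / nu x <= t) ->
    iota (sup E) <= t.
  move=> t0 Ht; rewrite -(iota_rho t0) iota_le; apply: ge_sup; first by exists 0.
  move=> u [->|[x [Hr xn ->]]]; first by rewrite -(iota_le 0) rmorph0 iota_rho.
  move: (Ht x Hr xn); rewrite -[X in X <= _](iota_rho (ratio_ge0 x)).
  by rewrite -[X in _ <= X](iota_rho t0) iota_le.
exists (iota (sup E)); split.
  split; first by rewrite -(rmorph0 iota) iota_le.
    move=> x Hr xn; rewrite -[X in X <= _](iota_rho (ratio_ge0 x)) iota_le.
    apply: supE; right.
    by exists x.
  exact: least.
have c1 : 0 < c + 1 by rewrite ltr_wpDl // ltW.
apply: le_lt_trans (least (c + 1)^-1 _ _) _.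
- by rewrite invr_ge0 ltW.
- move=> x Hr xn; rewrite ler_pdivrMr ?(nu_gt0 Hnu) //.
  by rewrite mulrC ler_pdivlMr //; apply: Hy.
- by rewrite invf_lt1 // ltrDr.
Qed.
End Main.

Section Gen.
Variables (R : realType) (F : numFieldType) (n m : nat).
Variable iota : {rmorphism R -> F}.
Hypothesis iota_le : forall x y, (iota x <= iota y) = (x <= y).
Hypothesis iota_lt : forall x y, (iota x < iota y) = (x < y).
Variable rho : F -> R.
Hypothesis iota_rho : forall x, 0 <= x -> iota (rho x) = x.
Variable psi : 'rV[R]_m -> 'cV[F]_n.
Hypothesis psiD : forall u v, psi (u + v) = psi u + psi v.
Hypothesis psiZ : forall r v, psi (r *: v) = iota r *: psi v.
Hypothesis psi_eq0 : forall v, psi v = 0 -> v = 0.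
Hypothesis psi_surj : forall x, exists v, x = psi v.

Lemma main_generic : theorem2p7_over F n.
Proof.
move=> nu A Hnu Hne; cbv zeta => Hadd.
have [P HP] : exists P : 'cV[F]_n -> 'cV[F]_n,
    forall x, range_mx (1%:M - A) (P x) /\ null_mx (1%:M - A) (x - P x).
  have Hd := decompose Hnu Hadd.
  exists (fun x => proj1_sig (constructive_indefinite_description _ (Hd x))).
  move=> x; exact: (proj2_sig (constructive_indefinite_description _ (Hd x))).
have h23 := ii_iii iota_le iota_lt iota_rho psiD psiZ psi_eq0 psi_surj Hnu Hadd Hne HP.
have h31 := iii_i Hnu Hadd HP.
have h12 := @i_ii _ _ _ A Hnu.
split; split => h.
- exact: h12.
- exact: h31 (h23 h).
- exact: h23.
- exact: h12 (h31 h).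
Qed.
End Gen.

Local Open Scope complex_scope.

Theorem theorem2p7 (R : realType) (n : nat) :
  theorem2p7_over R n /\ theorem2p7_over R[i] n.
Proof.
split.
- apply: (@main_generic R R n n idfun _ _ id _ (fun v => v^T)).
  + by [].
  + by [].
  + by [].
  + by move=> u v; rewrite linearD.
  + by move=> r v; rewrite linearZ.
  + by move=> v /eqP; rewrite -trmx0 (inj_eq trmx_inj) => /eqP.
  + by move=> x; exists x^T; rewrite trmxK.
- apply: (@main_generic R R[i] n (n + n) (real_complex R) _ _ (@complex.Re R) _
     (fun v => \col_i (v 0 (lshift n i) +i* v 0 (rshift n i)))).
  + exact: lecR.
  + exact: ltcR.
  + by case=> a b /ger0_Im /= ->.
  + by move=> u v; apply/matrixP => i j; rewrite !mxE.
  + by move=> r v; apply/matrixP => i j; rewrite !mxE; simpc.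
  + move=> v /matrixP H; apply/rowP => j; rewrite -(splitK j).
    case: (split j) => k; have := H k 0; rewrite !mxE /=; by case.
  + move=> x; exists (row_mx (\row_i complex.Re (x i 0)) (\row_i complex.Im (x i 0))).
    apply/matrixP => i j; rewrite mxE row_mxEl row_mxEr !mxE ord1.
    by case: (x i 0).
Qed.
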